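(* Let $\alpha$ be a composition of $n$ and let $D=S_{\omega(\alpha)}\subseteq[n-1]$. Then for each $i\ge 0$, $$\hat L_\alpha^{(i)}=\sum_{E\subseteq[n+i-1]}|T(D,E)|\,L_{\omega(\mathcal C(E))}.$$
   Context: For a composition $\alpha=(\alpha_1,\dots,\alpha_k)$ of $n$, $S_\alpha=\{\alpha_1,\alpha_1+\alpha_2,\dots,\alpha_1+\dots+\alpha_{k-1}\}\subseteq[n-1]$; for $E=\{e_1<\dots<e_k\}\subseteq[m-1]$, $\mathcal C(E)=(e_1,e_2-e_1,\dots,m-e_k)$, a composition of $m$. $\mathrm{rev}(\alpha)=(\alpha_k,\dots,\alpha_1)$ and $\omega(\alpha)$ is the composition of $n$ with $S_{\omega(\alpha)}=[n-1]\setminus S_{\mathrm{rev}(\alpha)}$. $L_\beta$ is the fundamental quasisymmetric function: for $\beta$ a composition of $m$, $L_\beta=\sum x_{i_1}\cdots x_{i_m}$ over $i_1\le\dots\le i_m$ with $i_j<i_{j+1}$ whenever $j\in S_\beta$. $\hat L_\alpha=\sum x^\sigma$, summed over all sequences $(\sigma_1,\dots,\sigma_n)$ of nonempty finite multisets of positive integers with $\max\sigma_j\le\min\sigma_{j+1}$ for all $j$ and $\max\sigma_j<\min\sigma_{j+1}$ when $j\in S_\alpha$, where $x^\sigma=\prod_r x_r^{(\text{total multiplicity of } r \text{ in } \sigma_1,\dots,\sigma_n)}$. $\hat L_\alpha^{(i)}$ denotes the homogeneous component of $\hat L_\alpha$ of degree $n+i$. For $D\subseteq[n-1]$ and $E\subseteq[n+i-1]$,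 an $i$-extension of $D$ to $E$ is an injective order-preserving map $t:[n-1]\to[n+i-1]$ with $t(D)\subseteq E$ and $E\setminus t(D)=[n+i-1]\setminus t([n-1])$; $T(D,E)$ is the set of $i$-extensions of $D$ to $E$. *)

(* Defs.v *)
From HB Require Import structures.
From mathcomp Require Import all_boot all_algebra.
From mathcomp Require Import mpoly.
Set Implicit Arguments. Unset Strict Implicit. Unset Printing Implicit Defensive.
Import GRing.Theory.
Local Open Scope ring_scope.

Definition is_comp (n : nat) (a : seq nat) : bool :=
  all (fun x => 0 < x)%N a && (sumn a == n).

Definition Sset (a : seq nat) : pred nat :=
  fun k => k \in [seq sumn (take j a) | j <- iota 1 (size a).-1].

(* C(E) for E a subset of [m-1] (given as a predicate on nat, only its
   elements in [m-1] matter): (e1, e2-e1, ..., m-ek) *)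
Definition compOfSet (m : nat) (E : pred nat) : seq nat :=
  pairmap (fun x y => y - x)%N 0%N (rcons [seq k <- iota 1 m.-1 | E k] m).

Definition omega (n : nat) (a : seq nat) : seq nat :=
  compOfSet n (fun k => ~~ Sset (rev a) k).

(* A set E : {set 'I_k} encodes the subset {v+1 | v in E} of [k]. *)
Definition natset (k : nat) (E : {set 'I_k}) : pred nat :=
  fun x => [exists v in E, x == (val v).+1].

(* The fundamental quasisymmetric function L_b, truncated to the variables
   x_1..x_N (variable x_{r+1} is 'X_r, r : 'I_N). *)
Definition tval (N m : nat) (t : m.-tuple 'I_N) (j : nat) : nat :=
  nth 0%N [seq val x | x <- t] j.

Definition fundL (N : nat) (b : seq nat) : {mpoly int[N]} :=
  \sum_(t : (sumn b).-tuple 'I_N |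
         [forall j : 'I_(sumn b), (j.+1 < sumn b)%N ==>
            ((tval t j <= tval t j.+1)%N &&
             (Sset b j.+1 ==> (tval t j < tval t j.+1)%N))])
     \prod_(j < sumn b) 'X_(tnth t j).

(* Degree (n+i) component of hat L_a, truncated to x_1..x_N.  A sequence
   (sigma_1..sigma_n) of nonempty finite multisets is given by multiplicity
   functions; in degree n+i every multiplicity is <= n+i. *)
Definition mult (N n K : nat) (s : n.-tuple {ffun 'I_N -> 'I_K.+1})
  (j : nat) (r : 'I_N) : nat := nth [ffun => ord0] s j r.

Definition hatL (N n i : nat) (a : seq nat) : {mpoly int[N]} :=
  \sum_(s : n.-tuple {ffun 'I_N -> 'I_(n + i).+1} |
         [&& (\sum_(j < n) \sum_(r : 'I_N) mult s j r == n + i)%N,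
             [forall j : 'I_n, [exists r : 'I_N, (0 < mult s j r)%N]] &
             [forall j : 'I_n, (j.+1 < n)%N ==>
                [forall r : 'I_N, forall r' : 'I_N,
                   ((0 < mult s j r)%N && (0 < mult s j.+1 r')%N) ==>
                   ((r <= r')%N && (Sset a j.+1 ==> (r < r')%N))]]])
     \prod_(j < n) \prod_(r : 'I_N) 'X_r ^+ mult s j r.

(* |T(D,E)| for D subset of [n-1], E subset of [m-1]: maps t : [n-1] -> [m-1]
   (k+1 |-> (t k)+1) injective and order preserving (= strictly increasing),
   with t(D) in E and E \ t(D) = [m-1] \ t([n-1]). *)
Definition Tcount (n m : nat) (D E : pred nat) : nat :=
  #|[set t : {ffun 'I_n.-1 -> 'I_m.-1} |
     [&& [forall k : 'I_n.-1, forall k' : 'I_n.-1, (k < k')%N ==> (t k < t k')%N],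
         [forall k : 'I_n.-1, D k.+1 ==> E (t k).+1] &
         [forall v : 'I_m.-1,
            (E v.+1 && ~~ [exists k : 'I_n.-1, D k.+1 && (t k == v)])
            == ~~ [exists k : 'I_n.-1, t k == v]]]]|.

(* Main.v *)
Require Import Defs.
From HB Require Import structures.
From mathcomp Require Import all_boot all_algebra.
From mathcomp Require Import mpoly.
From mathcomp Require Import zify.
Set Implicit Arguments. Unset Strict Implicit. Unset Printing Implicit Defensive.
Import GRing.Theory.


Lemma Sset_rev (a : seq nat) k : (k <= sumn a)%N ->
  Sset (rev a) k = Sset a (sumn a - k).
Proof.
move=> hk; rewrite /Sset size_rev.
have ps j : (j <= size a)%N ->
  sumn (take j (rev a)) = (sumn a - sumn (take (size a - j) a))%N.
  move=> hj; rewrite take_rev sumn_rev.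
  have := cat_take_drop (size a - j) a => /(congr1 sumn); rewrite sumn_cat => <-.
  by rewrite addKn.
have pb j : (sumn (take j a) <= sumn a)%N.
  by rewrite -{2}(cat_take_drop j a) sumn_cat leq_addr.
apply/mapP/mapP => -[j]; rewrite mem_iota => /andP[j1 j2] hj.
- exists (size a - j)%N; first by rewrite mem_iota; lia.
  rewrite hj ps; last by lia.
  have := pb (size a - j)%N; have := pb (size a - (size a - j))%N.
  have -> : (size a - (size a - j) = j)%N by lia.
  lia.
- exists (size a - j)%N; first by rewrite mem_iota; lia.
  rewrite ps; last by lia.
  have -> : (size a - (size a - j) = j)%N by lia.
  have := pb j; lia.
Qed.

Lemma sumn_take_pairmap x0 (u : seq nat) j : path leq x0 u -> (j <= size u)%N ->
  sumn (take j (pairmap (fun x y => y - x)%N x0 u)) = (nth x0 (x0 :: u) j - x0)%N.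
Proof.
elim: u x0 j => [|y u IH] x0 j.
  by case: j => [|j] //= _ _; rewrite subnn.
case: j => [|j] /=; first by rewrite subnn.
move=> /andP[xy pu] hj; rewrite IH //.
have : (y <= nth y (y :: u) j)%N.
  have := sorted_leq_nth leq_trans leqnn y (s := y :: u) pu.
  by move=> /(_ 0%N j); apply => //; rewrite inE /=; lia.
rewrite (set_nth_default y x0) /=; last by lia.
lia.
Qed.

Lemma compOfSet_spec m (E : pred nat) :
  sumn (compOfSet m E) = m /\
  forall k, Sset (compOfSet m E) k = [&& (0 < k)%N, (k < m)%N & E k].
Proof.
set s := [seq k <- iota 1 m.-1 | E k].
have ss : sorted ltn s by apply: sorted_filter => //; [exact: ltn_trans | exact: iota_ltn_sorted].
have sr k : k \in s -> (0 < k < m)%N by rewrite /s mem_filter mem_iota => /andP[_]; lia.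
have hp : path leq 0%N (rcons s m).
  rewrite rcons_path; apply/andP; split.
    case: s ss sr => //= x s' ss sr; idtac.
    exact: (sub_path (fun a b => @ltnW a b) ss).
  case: s ss sr => //= x s' ss sr; have := sr (last x s'); rewrite mem_last => /(_ isT); lia.
have hsum j : (j <= (size s).+1)%N -> sumn (take j (compOfSet m E)) = nth 0%N (0%N :: rcons s m) j.
  by move=> hj; rewrite /compOfSet -/s sumn_take_pairmap // ?subn0 // size_rcons.
have hsz : size (compOfSet m E) = (size s).+1 by rewrite /compOfSet size_pairmap size_rcons.
split.
  rewrite -(take_size (compOfSet m E)) hsz hsum //= nth_rcons ltnn eqxx //.
move=> k; rewrite /Sset hsz /=.
have -> : [seq sumn (take j (compOfSet m E)) | j <- iota 1 (size s)] = s.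
  rewrite (_ : [seq sumn (take j (compOfSet m E)) | j <- iota 1 (size s)] =
     [seq nth 0%N (rcons s m) j.-1 | j <- iota 1 (size s)]); last first.
    by apply/eq_in_map => j; rewrite mem_iota => /andP[h1 h2]; rewrite hsum; [case: j h1 {h2} | lia].
  rewrite -[1%N]addn0 iotaDl -map_comp.
  rewrite (eq_map (g := fun j => nth 0%N (rcons s m) j)); last by move=> j.
  by rewrite map_nth_iota0 ?size_rcons // -cats1 take_size_cat.
rewrite /s mem_filter mem_iota andbC; lia.
Qed.

Lemma omega_spec n a : sumn (omega n a) = n /\
  forall k, Sset (omega n a) k = [&& (0 < k)%N, (k < n)%N & ~~ Sset (rev a) k].
Proof. exact: compOfSet_spec. Qed.

Lemma SsetD n a k : sumn a = n -> (0 < k < n)%N ->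
  Sset (omega n a) k = ~~ Sset a (n - k).
Proof.
move=> sa hk; have [_ ->] := omega_spec n a; rewrite Sset_rev sa; last lia.
by case/andP: hk => -> ->.
Qed.

Definition G N m (P : pred nat) : {mpoly int[N]} :=
  \sum_(t : m.-tuple 'I_N |
         [forall j : 'I_m, (j.+1 < m) ==>
            ((Defs.tval t j <= Defs.tval t j.+1) &&
             (P j.+1 ==> (Defs.tval t j < Defs.tval t j.+1)))])
     \prod_(j < m) 'X_(tnth t j).

Lemma fundL_G N b : fundL N b = G N (sumn b) (Sset b).
Proof. by []. Qed.

Lemma G_congr N m (P Q : pred nat) : (forall k, (0 < k < m)%N -> P k = Q k) ->
  G N m P = G N m Q.
Proof.
move=> h; apply: eq_bigl => t; apply: eq_forallb => j.
case: (ltnP j.+1 m) => // hj; by rewrite h.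
Qed.

Lemma fundL_omega N m (P : pred nat) :
  fundL N (omega m (compOfSet m P)) = G N m (fun k => ~~ P (m - k)).
Proof.
have [s1 s2] := omega_spec m (compOfSet m P).
have [c1 c2] := compOfSet_spec m P.
rewrite fundL_G s1; apply: G_congr => k hk.
rewrite s2 Sset_rev c1; last lia.
have h1 : (0 < m - k)%N by lia.
have h2 : (m - k < m)%N by lia.
by rewrite c2 h1 h2; case/andP: hk => -> ->.
Qed.

Definition incr a b (t : {ffun 'I_a -> 'I_b}) : bool :=
  [forall k : 'I_a, forall k' : 'I_a, (k < k')%N ==> (t k < t k')%N].

Lemma incr_inj a b (t : {ffun 'I_a -> 'I_b}) : incr t -> injective t.
Proof.
move=> /forallP h k k' e; apply: val_inj => /=.
case: (ltngtP k k') => // hk.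
- by have := forallP (h k) k'; rewrite hk e ltnn.
- by have := forallP (h k') k; rewrite hk e ltnn.
Qed.

Definition refl a b (t : {ffun 'I_a -> 'I_b}) : {ffun 'I_a -> 'I_b} :=
  [ffun k => rev_ord (t (rev_ord k))].

Lemma reflK a b : involutive (@refl a b).
Proof. by move=> t; apply/ffunP => k; rewrite !ffunE !rev_ordK. Qed.

Lemma incr_refl a b (t : {ffun 'I_a -> 'I_b}) : incr (refl t) = incr t.
Proof.
suff h : forall t : {ffun 'I_a -> 'I_b}, incr t -> incr (refl t).
  by apply/idP/idP => [/h|/h //]; rewrite reflK.
move=> u /forallP hu; apply/forallP => k; apply/forallP => k'; apply/implyP => kk.
rewrite !ffunE /=.
have := forallP (hu (rev_ord k')) (rev_ord k); rewrite /= => /implyP.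
have hk := ltn_ord k'; have hk' := ltn_ord (u (rev_ord k)); have hk'' := ltn_ord (u (rev_ord k')).
move=> /(_ _); lia.
Qed.

Lemma natsetS k (E : {set 'I_k}) (v : 'I_k) : natset E v.+1 = (v \in E).
Proof.
apply/existsP/idP => [[w /andP[wE /eqP [e]]]|vE]; last by exists v; rewrite vE eqxx.
by rewrite (_ : v = w) //; apply: val_inj.
Qed.

Definition Et a b (D : pred nat) (t : {ffun 'I_a -> 'I_b}) : {set 'I_b} :=
  [set v | [exists k : 'I_a, D k.+1 && (t k == v)] || ~~ [exists k : 'I_a, t k == v]].

Lemma TS_char a b (D : pred nat) (E : {set 'I_b}) (t : {ffun 'I_a -> 'I_b}) :
  [&& [forall k : 'I_a, forall k' : 'I_a, (k < k')%N ==> (t k < t k')%N],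
      [forall k : 'I_a, D k.+1 ==> natset E (t k).+1] &
      [forall v : 'I_b,
         (natset E v.+1 && ~~ [exists k : 'I_a, D k.+1 && (t k == v)])
         == ~~ [exists k : 'I_a, t k == v]]]
  = incr t && (E == Et D t).
Proof.
rewrite -/(incr t); case: (incr t) => //=.
apply/andP/eqP => [[/forallP h1 /forallP h2]|->].
  apply/setP => v; rewrite inE.
  case: (boolP [exists k : 'I_a, D k.+1 && (t k == v)]) => [/existsP[k /andP[Dk /eqP <-]]| nA].
    by have := implyP (h1 k) Dk; rewrite natsetS.
  by have /eqP := h2 v; rewrite natsetS nA andbT.
split.
  apply/forallP => k; apply/implyP => Dk; rewrite natsetS inE.
  by apply/orP; left; apply/existsP; exists k; rewrite Dk eqxx.
apply/forallP => v; rewrite natsetS inE.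
case: (boolP [exists k : 'I_a, D k.+1 && (t k == v)]) => hA /=; first last.
  by rewrite andbT; case: (boolP [exists k : 'I_a, t k == v]).

rewrite eq_sym eqbF_neg negbK; case/existsP: hA => k /andP[_ e]; by apply/existsP; exists k.
Qed.

Definition Qp (al : seq nat) a b (p : {ffun 'I_a -> 'I_b}) : pred nat :=
  fun k => [exists j : 'I_a, ((p j).+1 == k) && Sset al j.+1].

Section RHS.
Variables (n i : nat) (alpha : seq nat) (N : nat).
Hypotheses (n0 : (0 < n)%N) (sa : sumn alpha = n).
Local Notation m := (n + i).

Lemma QE_Et (t : {ffun 'I_n.-1 -> 'I_m.-1}) k : incr t -> (0 < k < m)%N ->
  ~~ natset (Et (Sset (omega n alpha)) t) (m - k) = Qp alpha (refl t) k.
Proof.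
move=> it hk.
have hv : (m - k).-1 < m.-1 by lia.
have -> : (m - k)%N = (Ordinal hv).+1 by rewrite /=; lia.
rewrite natsetS inE negb_or /Qp.
apply/idP/idP => [/andP[nA /negPn/existsP[k' /eqP tk]]|/existsP[j /andP[/eqP pj Sj]]].
  have hk' := ltn_ord k'.
  apply/existsP; exists (rev_ord k'); rewrite ffunE rev_ordK tk /=; apply/andP; split.
    apply/eqP; lia.
  have : ~~ Sset (omega n alpha) k'.+1.
    apply/negP => Dk; move/negP: nA; apply; apply/existsP; exists k'; by rewrite Dk tk eqxx.
  rewrite (SsetD (k:=k'.+1) sa); last lia.
  rewrite negbK (_ : (n.-1 - k'.+1).+1 = n - k'.+1)%N //; lia.
move: pj; rewrite ffunE /= => pj.
have hj := ltn_ord j; have htj := ltn_ord (t (rev_ord j)).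
apply/andP; split; last first.
  apply/negPn/existsP; exists (rev_ord j); apply/eqP/val_inj => /=; lia.
apply/negP => /existsP[k' /andP[Dk /eqP tk]].
have e : k' = rev_ord j.
  apply: (incr_inj it); apply: val_inj; rewrite tk /=; lia.
move: Dk; rewrite e (SsetD (k:=(rev_ord j).+1) sa) /=; last lia.
by rewrite (_ : (n - (n.-1 - j.+1).+1) = j.+1)%N ?Sj //; lia.
Qed.

Lemma rhs_eq :
  (\sum_(E : {set 'I_m.-1})
     (Tcount n m (Sset (omega n alpha)) (natset E))%:R
       *: fundL N (omega m (compOfSet m (natset E))))%R
  = (\sum_(p : {ffun 'I_n.-1 -> 'I_m.-1} | incr p) G N m (Qp alpha p))%R.
Proof.
set D := Sset (omega n alpha).
transitivity (\sum_(E : {set 'I_m.-1}) \sum_(t : {ffun 'I_n.-1 -> 'I_m.-1} | incr t && (E == Et D t))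
     G N m (fun k => ~~ natset E (m - k)%N))%R.
  apply: eq_bigr => E _; rewrite fundL_omega scaler_nat /Tcount -sumr_const.
  by apply: eq_bigl => t; rewrite inE TS_char.
rewrite (exchange_big_dep predT) //=.
transitivity (\sum_(t : {ffun 'I_n.-1 -> 'I_m.-1} | incr t)
     G N m (fun k => ~~ natset (Et D t) (m - k)%N))%R.
  rewrite [RHS]big_mkcond; apply: eq_bigr => t _.
  case: (boolP (incr t)) => it.
    by apply: (big_pred1 (Et D t)) => E /=.
  by rewrite big_pred0.
rewrite [RHS](reindex_inj (h := @refl _ _) (inv_inj (@reflK _ _))).
apply: eq_big => t; first by rewrite incr_refl.
move=> it; apply: G_congr => k hk; rewrite /D QE_Et //.
Qed.

End RHS.

Lemma nth_sumn (a : seq nat) j : nth 0 a j = sumn (take j.+1 a) - sumn (take j a).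
Proof.
case: (ltnP j (size a)) => h; first by rewrite (take_nth 0 h) sumn_rcons addKn.
by rewrite nth_default // !take_oversize ?subnn //; lia.
Qed.

Lemma eq_from_sumn_take (a b : seq nat) : size a = size b ->
  (forall j, j <= size a -> sumn (take j a) = sumn (take j b)) -> a = b.
Proof.
move=> hs h; apply: (eq_from_nth (x0:=0)) => // j hj.
by rewrite !nth_sumn !h //; lia.
Qed.

Lemma sumn_take_leq (l : seq nat) a b : a <= b -> sumn (take a l) <= sumn (take b l).
Proof.
move=> ab; rewrite -(subnKC ab) takeD sumn_cat; exact: leq_addr.
Qed.

Lemma sumn_take_ltn (l : seq nat) a b : all (fun x => 0 < x) l -> a < b -> b <= size l ->
  sumn (take a l) < sumn (take b l).
Proof.
move=> /allP pos; elim: b => // c IH ac cl.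
rewrite (take_nth 0 cl) sumn_rcons.
have hp : 0 < nth 0 l c by apply: pos; exact: mem_nth.
have [lt|eq] : a < c \/ a = c by lia.
  have := IH lt (ltnW cl); lia.
subst; lia.
Qed.

Lemma sum_take_total (l : seq nat) j : sumn (take j l) + sumn (drop j l) = sumn l.
Proof. by rewrite -sumn_cat cat_take_drop. Qed.

Section Ord.
Variable N : nat.

Lemma cnt_sw (f : 'I_N -> nat) r :
  count_mem r (flatten [seq nseq (f r') r' | r' <- enum 'I_N]) = f r.
Proof.
rewrite count_flatten -map_comp sumnE big_map big_enum /=.
rewrite (bigD1 r) //= count_nseq /= eqxx mul1n big1 ?addn0 // => r' /negbTE.
by rewrite count_nseq /= eq_sym => ->.
Qed.

Lemma sum_cnt (l : seq 'I_N) : \sum_(r : 'I_N) count_mem r l = size l.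
Proof.
elim: l => [|x l IH] /=; first by rewrite big1.
rewrite big_split /= IH (bigD1 x) //= eqxx big1 // => r /negbTE.
by rewrite eq_sym => ->.
Qed.

End Ord.

Lemma pairwise_nseq T (e : rel T) k x : e x x -> pairwise e (nseq k x).
Proof.
move=> exx; elim: k => //= k ->; rewrite andbT all_nseq; by rewrite exx orbT.
Qed.

Lemma sorted_flatten_nseq (T : eqType) (e : rel T) (f : T -> nat) (l : seq T) :
  transitive e -> reflexive e -> sorted e l ->
  sorted e (flatten [seq nseq (f x) x | x <- l]).
Proof.
move=> tr rf; rewrite !(sorted_pairwise tr).
elim: l => //= x l IH /andP[hx hl].
rewrite pairwise_cat IH // pairwise_nseq ?rf // andbT.
rewrite andbT; apply/allrelP => a b /nseqP[-> _] /flattenP[c /mapP[y yl ->] /nseqP[-> _]].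
exact: (allP hx).
Qed.

Lemma sorted_flatten (T : Type) (e : rel T) (x0 : T) (L : seq (seq T)) :
  transitive e -> all (fun l => 0 < size l) L -> all (sorted e) L ->
  (forall j, j.+1 < size L -> e (last x0 (nth [::] L j)) (head x0 (nth [::] L j.+1))) ->
  sorted e (flatten L).
Proof.
move=> tr; elim: L => //= l L IH /andP[nl nL] /andP[sl sL] adj.
have sL' : sorted e (flatten L).
  by apply: IH => // j hj; apply: (adj j.+1).
case: L nL sL adj sL' {IH} => [|l' L] /=; first by rewrite cats0.
move=> /andP[nl' _] _ adj sL'.
case: l nl sl adj => // y l0 _ sl adj /=.
have sl' : path e y l0 := sl.
rewrite cat_path sl' /=.
case: l' nl' adj sL' => // z l1 _ adj sL' /=.
rewrite (sL' : path e z (l1 ++ flatten L)) andbT.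
by have := adj 0 isT.
Qed.

Lemma flatten_boundary (T : eqType) (x0 : T) (L : seq (seq T)) j :
  all (fun l => 0 < size l) L -> j.+1 < size L ->
  let b := sumn (take j.+1 (shape L)) in
  nth x0 (flatten L) b = head x0 (nth [::] L j.+1) /\
  nth x0 (flatten L) b.-1 = last x0 (nth [::] L j).
Proof.
move=> hpos hj b.
have pos : forall l, l \in L -> 0 < size l by move=> l hl; exact: (allP hpos).
have hj' : j < size L by exact: ltnW.
have e : flatten L = flatten (take j.+1 L) ++ flatten (drop j.+1 L).
  by rewrite -flatten_cat cat_take_drop.
have sz : size (flatten (take j.+1 L)) = b by rewrite size_flatten /shape map_take.
have nj : 0 < size (nth [::] L j) by apply: pos; apply: mem_nth.
have nj1 : 0 < size (nth [::] L j.+1) by apply: pos; apply: mem_nth.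
have ht : take j.+1 L = rcons (take j L) (nth [::] L j) by apply: take_nth.
have bpos : 0 < b.
  rewrite -sz ht flatten_rcons size_cat; exact: ltn_addl.
rewrite e; split.
  rewrite nth_cat sz ltnn subnn (drop_nth [::] hj) /=.
  by case: (nth [::] L j.+1) nj1.
rewrite nth_cat sz (_ : b.-1 < b); last by rewrite prednK.
rewrite -sz nth_last ht flatten_rcons last_cat.
by case: (nth [::] L j) nj.
Qed.

Lemma mem_take_drop (T : eqType) (x0 : T) (l : seq T) c d x :
  x \in take c (drop d l) ->
  exists a, [/\ d <= a, a < d + c, a < size l & nth x0 l a = x].
Proof.
move=> /(nthP x0) [a ha <-]; rewrite size_take size_drop in ha.
have [h1 h2] : a < c /\ a < size l - d.
  move: ha; case: ifP => h3 h4; split => //; lia.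
exists (d + a); rewrite nth_take ?nth_drop //; split => //; lia.
Qed.

Lemma pairmap_pos x0 (u : seq nat) : path ltn x0 u ->
  all (fun x => 0 < x) (pairmap (fun x y => y - x) x0 u).
Proof.
elim: u x0 => //= y u IH x0 /andP[h1 h2]; rewrite IH // andbT; lia.
Qed.

Lemma size_take_drop_leq (T : Type) (l : seq T) c d : size (take c (drop d l)) <= size l.
Proof. rewrite size_take size_drop; case: ifP; lia. Qed.

Section Pside.
Variables (n m : nat).
Hypotheses (n0 : 0 < n) (nm : n <= m).

Definition bl (p : {ffun 'I_n.-1 -> 'I_m.-1}) : seq nat :=
  [seq (p k).+1 | k <- enum 'I_n.-1].
Definition shp p := pairmap (fun x y => y - x) 0 (rcons (bl p) m).
Definition bpv p j := nth 0 (0 :: rcons (bl p) m) j.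

Lemma size_bl p : size (bl p) = n.-1.
Proof. by rewrite size_map size_enum_ord. Qed.

Lemma size_shp p : size (shp p) = n.
Proof. by rewrite size_pairmap size_rcons size_bl prednK. Qed.

Lemma nth_bl p (k : 'I_n.-1) : nth 0 (bl p) k = (p k).+1.
Proof. by rewrite (nth_map k) ?size_enum_ord // nth_ord_enum. Qed.

Lemma bpv_S p (k : 'I_n.-1) : bpv p k.+1 = (p k).+1.
Proof. by rewrite /bpv /= nth_rcons size_bl ltn_ord nth_bl. Qed.

Lemma bpv_n p : bpv p n = m.
Proof.
rewrite /bpv -(prednK n0) /= nth_rcons size_bl ltnn eqxx //.
Qed.

Lemma path_bl p : incr p -> path ltn 0 (rcons (bl p) m).
Proof.
move=> /forallP ip; rewrite rcons_path; apply/andP; split.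
  have : sorted ltn (bl p).
    rewrite /bl sorted_map.
    apply: (sub_sorted (e := relpre val ltn)).
      by move=> a b /= ab; have := implyP (forallP (ip a) b) ab.
    by rewrite -sorted_map val_enum_ord iota_ltn_sorted.
  have : all (fun x => 0 < x) (bl p) by apply/allP => x /mapP[k _ ->].
  by case: (bl p) => //= x s /andP[-> _] ->.
have := mem_last 0 (bl p); rewrite inE => /orP[/eqP ->|]; first lia.
move=> /mapP[k _ ->]; have := ltn_ord (p k); lia.
Qed.

Lemma shp_pos p : incr p -> all (fun x => 0 < x) (shp p).
Proof. by move=> ip; apply: pairmap_pos; apply: path_bl. Qed.

Lemma sumn_take_shp p j : incr p -> j <= n -> sumn (take j (shp p)) = bpv p j.
Proof.
move=> ip hj; rewrite /shp sumn_take_pairmap ?subn0 //.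
  by apply: sub_path (path_bl ip) => a b /ltnW.
by rewrite size_rcons size_bl prednK.
Qed.

Lemma sumn_shp p : incr p -> sumn (shp p) = m.
Proof.
move=> ip; rewrite -(take_size (shp p)) size_shp sumn_take_shp // bpv_n //.
Qed.

End Pside.

Lemma prod_cnt N (l : seq 'I_N) :
  (\prod_(r : 'I_N) 'X_r ^+ count_mem r l = \prod_(x <- l) 'X_x :> {mpoly int[N]})%R.
Proof.
elim: l => [|x l IH]; first by rewrite big_nil; apply: big1 => r _; rewrite expr0.
rewrite big_cons -IH /=.
under eq_bigr => r _ do rewrite exprD.
rewrite big_split /=; congr (_ * _)%R.
rewrite (bigD1 x) //= eqxx expr1 big1 ?mulr1 // => r /negbTE.
by rewrite eq_sym => ->; rewrite expr0.
Qed.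

Section LHS.
Variables (n i : nat) (alpha : seq nat) (N' : nat).
Hypothesis n0 : (0 < n)%N.
Local Notation N := N'.+1.
Local Notation m := (n + i).
Local Notation S := (Sset alpha).
Local Notation PF := {ffun 'I_n.-1 -> 'I_m.-1}.
Local Notation WT := (m.-tuple 'I_N).
Local Notation ST := (n.-tuple {ffun 'I_N -> 'I_m.+1}).

Lemma nm : n <= m. Proof. exact: leq_addr. Qed.
Lemma lenm : n.-1 <= m.-1. Proof. lia. Qed.

Definition valS (s : ST) : bool :=
  [&& (\sum_(j < n) \sum_(r : 'I_N) mult s j r == n + i)%N,
      [forall j : 'I_n, [exists r : 'I_N, (0 < mult s j r)%N]] &
      [forall j : 'I_n, (j.+1 < n)%N ==>
         [forall r : 'I_N, forall r' : 'I_N,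
            ((0 < mult s j r)%N && (0 < mult s j.+1 r')%N) ==>
            ((r <= r')%N && (Sset alpha j.+1 ==> (r < r')%N))]]].

Definition wc (P : pred nat) (w : WT) : bool :=
  [forall j : 'I_m, (j.+1 < m) ==>
     ((Defs.tval w j <= Defs.tval w j.+1) &&
      (P j.+1 ==> (Defs.tval w j < Defs.tval w j.+1)))].

Definition valJ (pw : PF * WT) := incr pw.1 && wc (Qp alpha pw.1) pw.2.

Definition blk (p : PF) (w : WT) j : seq 'I_N := nth [::] (reshape (shp p) w) j.

Definition phi (pw : PF * WT) : ST :=
  [tuple [ffun r => inord (count_mem r (blk pw.1 pw.2 j))] | j < n].

Definition bw (s : ST) j : seq 'I_N := flatten [seq nseq (mult s j r) r | r <- enum 'I_N].
Definition BW s := [seq bw s j | j <- iota 0 n].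
Definition psiw s : WT := insubd (nseq_tuple m ord0) (flatten (BW s)).
Definition psip s : PF :=
  [ffun k => insubd (widen_ord lenm k) (sumn (take k.+1 (shape (BW s)))).-1].
Definition psi s := (psip s, psiw s).

Definition rle : rel 'I_N := relpre val leq.
Lemma rle_tr : transitive rle. Proof. move=> b a c; exact: leq_trans. Qed.
Lemma rle_anti : antisymmetric rle.
Proof. by move=> a b h; apply: val_inj; apply: anti_leq. Qed.
Lemma rle_refl : reflexive rle. Proof. by move=> a; exact: leqnn. Qed.

Lemma sorted_enum : sorted rle (enum 'I_N).
Proof. by rewrite /rle -sorted_map val_enum_ord iota_sorted. Qed.

Lemma sorted_sw (f : 'I_N -> nat) : sorted rle (flatten [seq nseq (f r) r | r <- enum 'I_N]).
Proof. apply: sorted_flatten_nseq; [exact: rle_tr | exact: rle_refl | exact: sorted_enum]. Qed.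

Lemma tvalE (w : WT) j : j < m -> Defs.tval w j = nth ord0 w j.
Proof. by move=> hj; rewrite /Defs.tval (nth_map ord0) // size_tuple. Qed.

Lemma mult_tnth (s : ST) (j : 'I_n) r : mult s j r = tnth s j r.
Proof. by rewrite /mult (tnth_nth [ffun => ord0]). Qed.

Lemma mult_phi pw (j : 'I_n) r : mult (phi pw) j r = count_mem r (blk pw.1 pw.2 j).
Proof.
rewrite /mult nth_mktuple ffunE inordK // ltnS.
apply: (leq_trans (count_size _ _)); rewrite /blk nth_reshape.
by apply: (leq_trans (size_take_drop_leq _ _ _)); rewrite size_tuple.
Qed.

Lemma mem_bw s j x : (x \in bw s j) = (0 < mult s j x).
Proof. by rewrite -has_pred1 has_count /bw cnt_sw. Qed.

Lemma size_bw s j : size (bw s j) = \sum_(r : 'I_N) mult s j r.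
Proof. by rewrite -sum_cnt; apply: eq_bigr => r _; rewrite cnt_sw. Qed.

Lemma nth_BW s j : j < n -> nth [::] (BW s) j = bw s j.
Proof. by move=> hj; rewrite (nth_map 0) ?size_iota // nth_iota. Qed.

Lemma size_BW s : size (BW s) = n.
Proof. by rewrite size_map size_iota. Qed.

Section ValS.
Variable s : ST.
Hypothesis vs : valS s.

Lemma vs1 : sumn (shape (BW s)) = m.
Proof.
case/and3P: vs => /eqP h _ _; rewrite -[X in _ = X]h.
rewrite /shape /BW -map_comp sumnE big_map.
have -> : iota 0 n = index_iota 0 n by rewrite /index_iota subn0.
rewrite big_mkord.
by apply: eq_bigr => j _ /=; rewrite size_bw.
Qed.

Lemma vs2 : all (fun x => 0 < x) (shape (BW s)).
Proof.
case/and3P: vs => _ /forallP h _; apply/allP => x /mapP[l /mapP[j]].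
rewrite mem_iota /= => hj -> ->.
have [r hr] := existsP (h (Ordinal hj)); rewrite size_bw.
by rewrite (bigD1 r) //= ltn_addr.
Qed.

Lemma vs2' : all (fun l => 0 < size l) (BW s).
Proof. by have := vs2; rewrite /shape all_map. Qed.

Lemma vs3 j x y : j.+1 < n -> x \in bw s j -> y \in bw s j.+1 ->
  (x <= y)%N && (S j.+1 ==> (x < y)%N).
Proof.
case/and3P: vs => _ _ /forallP h hj; rewrite !mem_bw => hx hy.
have := h (Ordinal (ltnW hj)); rewrite /= hj /= => /forallP /(_ x) /forallP /(_ y).
by rewrite hx hy.
Qed.

Lemma psip_val (k : 'I_n.-1) : ((psip s k).+1 = sumn (take k.+1 (shape (BW s))))%N.
Proof.
have hk : k.+1 < n by have := ltn_ord k; lia.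
have hs : size (shape (BW s)) = n by rewrite size_map size_BW.
have h1 : sumn (take k.+1 (shape (BW s))) < m.
  rewrite -vs1 -[X in _ < sumn X](take_oversize (n := n)) ?hs //.
  by apply: sumn_take_ltn vs2 hk _; rewrite hs.
have h2 : 0 < sumn (take k.+1 (shape (BW s))).
  have := sumn_take_ltn (a := 0) vs2 (ltn0Sn k); rewrite take0 /=; apply.
  by rewrite hs; exact: ltnW.
rewrite ffunE insubdK; first lia.
rewrite unfold_in; lia.
Qed.

Lemma incr_psip : incr (psip s).
Proof.
apply/forallP => k; apply/forallP => k'; apply/implyP => kk.
have := psip_val k; have := psip_val k'.
have := sumn_take_ltn (a := k.+1) (b := k'.+1) vs2 kk.
rewrite size_map size_BW => /(_ _); have := ltn_ord k'; move=> h3 h4.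
have := h4 (ltac:(lia)); lia.
Qed.

Lemma shp_psip : shp (psip s) = shape (BW s).
Proof.
apply: eq_from_sumn_take; first by rewrite (size_shp n0) size_map size_BW.
rewrite (size_shp n0) => j hj.
rewrite (sumn_take_shp n0 nm) //; last exact: incr_psip.
case: j hj => [|j] hj; first by rewrite take0.
case: (ltnP j.+1 n) => hj'.
  have hk : j < n.-1 by lia.
  by rewrite (bpv_S _ (Ordinal hk)) psip_val.
have -> : j.+1 = n by lia.
by rewrite (bpv_n n0) take_oversize ?vs1 // size_map size_BW.
Qed.

Lemma psiw_val : val (psiw s) = flatten (BW s).
Proof. by rewrite insubdK // unfold_in size_flatten vs1. Qed.

Lemma O1 : phi (psi s) = s.
Proof.
apply: eq_from_tnth => j; apply/ffunP => r; apply: val_inj => /=.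
have := mult_phi (psi s) j r; rewrite !mult_tnth => ->.
rewrite /blk /= shp_psip psiw_val flattenK nth_BW //.
by rewrite /bw cnt_sw mult_tnth.
Qed.

End ValS.

Lemma O4 s : valS s -> valJ (psi s).
Proof.
move=> vs; apply/andP; split; first exact: incr_psip.
have ne j' : j' < n -> 0 < size (bw s j').
  by move=> hj'; have /allP := vs2' vs; apply; rewrite -(nth_BW s hj'); apply: mem_nth; rewrite size_BW.
have sw : sorted rle (psiw s).
  rewrite psiw_val //; apply: (@sorted_flatten _ rle ord0 (BW s) rle_tr (vs2' vs)).
    by apply/allP => l /mapP[j' _ ->]; exact: sorted_sw.
  move=> j'; rewrite size_BW => hj'; rewrite !nth_BW //; last exact: ltnW.
  have hx : last ord0 (bw s j') \in bw s j'.
    by case: (bw s j') (ne j' (ltnW hj')) => // x l _; exact: (mem_last x l).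
  have hy : head ord0 (bw s j'.+1) \in bw s j'.+1.
    by case: (bw s j'.+1) (ne j'.+1 hj') => // x l _; exact: mem_head.
  by case/andP: (vs3 vs hj' hx hy).
move/(sortedP ord0): sw => sw.
apply/forallP => j; apply/implyP => hj.
rewrite !tvalE //= psiw_val //.
apply/andP; split.
  by have := sw j; rewrite size_tuple psiw_val // => /(_ hj).
apply/implyP => /existsP[k /andP[/eqP ek Sk]].
have hk : k.+1 < n by have := ltn_ord k; lia.
have := flatten_boundary ord0 (vs2' vs) (j := k); rewrite size_BW => /(_ hk) /=.
rewrite -(psip_val vs) /= => -[e1 e2].
have ej : nat_of_ord j = psip s k by case: ek.
rewrite ej e1 e2 !nth_BW //; last exact: ltnW.
have hx : last ord0 (bw s k) \in bw s k.
  by case: (bw s k) (ne k (ltnW hk)) => // x l _; exact: (mem_last x l).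
have hy : head ord0 (bw s k.+1) \in bw s k.+1.
  by case: (bw s k.+1) (ne k.+1 hk) => // x l _; exact: mem_head.
by case/andP: (vs3 vs hk hx hy) => _ /implyP; apply.
Qed.

Section ValJ.
Variables (p : PF) (w : WT).
Hypothesis vj : valJ (p, w).

Let ip : incr p := proj1 (andP vj).
Let wcw : wc (Qp alpha p) w := proj2 (andP vj).

Lemma sorted_w : sorted rle w.
Proof.
apply/(sortedP ord0) => j; rewrite size_tuple => hj.
have := forallP wcw (Ordinal (ltnW hj)); rewrite /= hj /= => /andP[h _].
by move: h; rewrite !tvalE //; exact: ltnW.
Qed.

Let sh := shp p.
Lemma sumn_sh : sumn sh = m. Proof. exact: (sumn_shp n0 nm ip). Qed.
Lemma size_sh : size sh = n. Proof. exact: (size_shp n0). Qed.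

Lemma blkE j : blk p w j = take (nth 0 sh j) (drop (sumn (take j sh)) w).
Proof. by rewrite /blk nth_reshape. Qed.

Lemma size_blk j : size (blk p w j) = nth 0 sh j.
Proof. by rewrite /blk -nth_shape reshapeKl // size_tuple sumn_sh. Qed.

Lemma sorted_blk j : sorted rle (blk p w j).
Proof. by rewrite blkE; apply: take_sorted; apply: drop_sorted; exact: sorted_w. Qed.

Lemma BW_phi : BW (phi (p, w)) = reshape sh w.
Proof.
rewrite -[RHS](take_size) -(map_nth_iota0 [::]) // size_reshape size_sh.
apply/eq_in_map => j; rewrite mem_iota /= => hj.
have e r : mult (phi (p, w)) j r = count_mem r (blk p w j) := mult_phi (p, w) (Ordinal hj) r.
rewrite /bw; under eq_map => r do rewrite e.
apply: (sorted_eq rle_tr rle_anti (sorted_sw _) (sorted_blk j)).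
by rewrite /perm_eq; apply/allP => x _ /=; rewrite cnt_sw.
Qed.

Lemma O3 : psi (phi (p, w)) = (p, w).
Proof.
rewrite /psi /psip /psiw BW_phi; congr pair.
  apply/ffunP => k; apply: val_inj; rewrite ffunE /=.
  have e : sumn (take k.+1 (shape (reshape sh w))) = (p k).+1.
    rewrite reshapeKl ?size_tuple ?sumn_sh // (sumn_take_shp n0 nm ip) ?bpv_S //.
    by have := ltn_ord k; lia.
  by rewrite e insubdK // unfold_in /=.
apply: val_inj; rewrite /psiw insubdK ?reshapeKr ?size_tuple ?sumn_sh //.
by rewrite unfold_in /= size_tuple.
Qed.

Lemma O2 : valS (phi (p, w)).
Proof.
have pos j : j < n -> 0 < nth 0 sh j.
  by move=> hj; have /allP := shp_pos n0 nm ip; apply; apply: mem_nth; rewrite size_sh.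
apply/and3P; split.
- apply/eqP; transitivity (\sum_(j < n) nth 0 sh j).
    apply: eq_bigr => j _; under eq_bigr => r _ do rewrite mult_phi.
    by rewrite sum_cnt size_blk.
  by rewrite -sumn_sh sumnE (big_nth 0) size_sh big_mkord.
- apply/forallP => j; have hs : 0 < size (blk p w j) by rewrite size_blk; exact: pos.
  apply/existsP; exists (head ord0 (blk p w j)).
  rewrite mult_phi -has_count has_pred1; by case: (blk p w j) hs => //= x l _; exact: mem_head.
apply/forallP => j; apply/implyP => hj; apply/forallP => r; apply/forallP => r'.
apply/implyP => /andP[].
rewrite (mult_phi _ j) (mult_phi _ (Ordinal hj)) -!has_count !has_pred1 /= !blkE.
move=> /(mem_take_drop ord0)[a [a1 a2 a3 <-]] /(mem_take_drop ord0)[a' [a1' a2' a3' <-]].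
have cS : sumn (take j.+1 sh) = sumn (take j sh) + nth 0 sh j.
  by rewrite (take_nth 0) ?sumn_rcons // size_sh; exact: ltnW.
have sl := sorted_leq_nth rle_tr rle_refl ord0 sorted_w.
have ha : a <= a' by lia.
apply/andP; split; first exact: sl.
apply/implyP => Sj.
have hk : j < n.-1 by lia.
have e : sumn (take j.+1 sh) = (p (Ordinal hk)).+1.
  by rewrite (sumn_take_shp n0 nm ip) // (bpv_S _ (Ordinal hk)).
set t := nat_of_ord (p (Ordinal hk)).
have et : t = nat_of_ord (p (Ordinal hk)) by [].
rewrite size_tuple in a3 a3'.
have ht : t.+1 < m by have := ltn_ord (p (Ordinal hk)); rewrite /t; lia.
have := forallP wcw (Ordinal (ltnW ht)); rewrite /= ht /= => /andP[_ /implyP].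
rewrite !tvalE //; last exact: ltnW.
move=> /(_ _) h.
have q : Qp alpha p t.+1 by apply/existsP; exists (Ordinal hk); rewrite eqxx Sj.
have := h q => lt.
have h1 : rle (nth ord0 w a) (nth ord0 w t) by apply: sl; rewrite ?inE ?size_tuple //; lia.
have h2 : rle (nth ord0 w t.+1) (nth ord0 w a') by apply: sl; rewrite ?inE ?size_tuple //; lia.
rewrite /rle /= in h1 h2; lia.
Qed.

Lemma O5 : (\prod_(j < n) \prod_(r : 'I_N) 'X_r ^+ mult (phi (p, w)) j r
   = \prod_(j < m) 'X_(tnth w j) :> {mpoly int[N]})%R.
Proof.
under eq_bigr => j _ do under eq_bigr => r _ do rewrite mult_phi.
under eq_bigr => j _ do rewrite prod_cnt.
transitivity (\prod_(l <- reshape sh w) \prod_(x <- l) 'X_x : {mpoly int[N]})%R.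
  by rewrite (big_nth [::]) size_reshape size_sh big_mkord.
by rewrite -big_flatten /= reshapeKr ?size_tuple ?sumn_sh // big_tuple.
Qed.

End ValJ.

Lemma lhs_eq : hatL N n i alpha =
  (\sum_(pw : PF * WT | valJ pw) \prod_(j < m) 'X_(tnth pw.2 j))%R.
Proof.
rewrite /hatL (reindex_onto phi psi); last by move=> s hs; exact: O1.
apply: eq_big => [[p w]|[p w] /andP[vs /eqP e]]; last first.
  by apply: O5; rewrite -e; exact: O4.
rewrite -/(valS (phi (p, w))).
apply/idP/idP => [/andP[vs /eqP e]|vj].
  by rewrite -e; exact: O4.
by rewrite O2 // O3 // eqxx.
Qed.
End LHS.

Unset Implicit Arguments.
Local Open Scope ring_scope.

Theorem mainTheorem3 (n : nat) (alpha : seq nat) (i N : nat) :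
  (0 < n)%N -> is_comp n alpha ->
  hatL N n i alpha =
  \sum_(E : {set 'I_((n + i).-1)})
     (Tcount n (n + i) (Sset (omega n alpha)) (natset E))%:R
       *: fundL N (omega (n + i) (compOfSet (n + i) (natset E))).
Proof.
move=> n0 /andP[_ /eqP sa].
rewrite (rhs_eq i N n0 sa).
case: N => [|N'].
  rewrite /hatL big_pred0; last first.
    move=> s; apply/negbTE/negP => /and3P[_ /forallP /(_ (Ordinal n0)) /existsP [[r hr] _] _].
    by [].
  rewrite big1 // => p _; rewrite /G big1 // => t _.
  have hm : (0 < n + i)%N by rewrite addn_gt0 n0.
  by case: (tnth t (Ordinal hm)).
rewrite (lhs_eq i alpha N' n0) /G pair_big_dep.
by apply: eq_bigl => pw.
Qed.
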